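(* Let $G\in\mathcal{G}(\widehat{C}_6,\widehat{C}_7)$, let $x\in V(G)$, let $A$ be a connected component of $G[N_2(x)]$ not belonging to $A^*$, and let $a\in V(A)$. Suppose $N(a)\cap D=\{v_1,v_2\}$ with $v_1\ne v_2$. Then one of the following holds: (i) $N(\{v_1,v_2\})\cap N_2(x)=\{a\}$; (ii) there is exactly one connected component $A'\neq A$ of $G[N_2(x)]$ such that $N(V(A'))\cap N(x)=\{v_1,v_2\}$, and every connected component $A''$ of $G[N_2(x)]$ with $A''\ne A$ and $A''\neq A'$ satisfies $\{v_1,v_2\}\cap N(V(A''))=\emptyset$.
   Context: All graphs are finite, simple and undirected. $\mathcal{G}(\widehat{C}_6,\widehat{C}_7)$ is the family of graphs with no subgraph (not necessarily induced) isomorphic to $C_6$ or $C_7$. For a vertex set $S$, $N_i(S)$ is the set of vertices at distance exactly $i$ from $S$, $N(S)=N_1(S)$, $N(v)=N(\{v\})$, $N_2(v)=N_2(\{v\})$ (all in $G$). $A^*$ is the set of connected components $A$ of $G[N_2(x)]$ for which there exists a vertex $a\in V(A)$ with $N(x)\cap N(a)=N(x)\cap N(V(A))$; $V(A^* )$ is the union of their vertex sets; and $D=N(x)\setminus N(V(A^* ))$. *)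

(* Defs.v *)
From mathcomp Require Import all_boot.
Set Implicit Arguments. Unset Strict Implicit. Unset Printing Implicit Defensive.

Section Graphs.
Variables (T : finType) (e : rel T).

Definition simple_graph : Prop := symmetric e /\ irreflexive e.

Definition has_Ck (k : nat) : Prop :=
  exists f : nat -> T, {in gtn k &, injective f} /\
    forall i, i < k -> e (f i) (f ((i.+1) %% k)).

Definition no_C6_C7 : Prop := ~ has_Ck 6 /\ ~ has_Ck 7.

Definition Nv (v : T) : {set T} := [set y | e v y].
Definition NS (S : {set T}) : {set T} :=
  [set y | (y \notin S) && [exists s in S, e s y]].
Definition N2 (x : T) : {set T} :=
  [set y | [&& y != x, ~~ e x y & [exists z, e x z && e z y]]].

Definition induced (W : {set T}) : rel T :=
  fun u v => [&& e u v, u \in W & v \in W].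

Definition is_comp (W C : {set T}) : bool :=
  [exists c in W, C == [set y | connect (induced W) c y]].

Definition in_Astar (x : T) (A : {set T}) : bool :=
  is_comp (N2 x) A &&
  [exists a in A, Nv x :&: Nv a == Nv x :&: NS A].

Definition VAstar (x : T) : {set T} :=
  [set y | [exists C : {set T}, in_Astar x C && (y \in C)]].

Definition Dset (x : T) : {set T} := Nv x :\: NS (VAstar x).

End Graphs.

(* Main.v *)
Require Import Defs.
From mathcomp Require Import all_boot.
Set Implicit Arguments. Unset Strict Implicit. Unset Printing Implicit Defensive.

Lemma mkC6 (T : finType) (e : rel T) u0 u1 u2 u3 u4 u5 :
  e u0 u1 -> e u1 u2 -> e u2 u3 -> e u3 u4 -> e u4 u5 -> e u5 u0 ->
  uniq [:: u0; u1; u2; u3; u4; u5] -> has_Ck e 6.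
Proof.
move=> h0 h1 h2 h3 h4 h5 U.
exists (fun i => nth u0 [:: u0; u1; u2; u3; u4; u5] i); split.
  by move=> i j Hi Hj /eqP; rewrite nth_uniq // => /eqP.
by case=> [|[|[|[|[|[|i]]]]]].
Qed.

Lemma mkC7 (T : finType) (e : rel T) u0 u1 u2 u3 u4 u5 u6 :
  e u0 u1 -> e u1 u2 -> e u2 u3 -> e u3 u4 -> e u4 u5 -> e u5 u6 -> e u6 u0 ->
  uniq [:: u0; u1; u2; u3; u4; u5; u6] -> has_Ck e 7.
Proof.
move=> h0 h1 h2 h3 h4 h5 h6 U.
exists (fun i => nth u0 [:: u0; u1; u2; u3; u4; u5; u6] i); split.
  by move=> i j Hi Hj /eqP; rewrite nth_uniq // => /eqP.
by case=> [|[|[|[|[|[|[|i]]]]]]].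
Qed.

Lemma connect_ind' (T : finType) (r : rel T) (P : T -> Prop) c :
  P c -> (forall y z, connect r c y -> P y -> r y z -> P z) ->
  forall y, connect r c y -> P y.
Proof.
move=> Pc step y /connectP [p]; elim/last_ind: p y => [|p z IH] y /=.
  by move=> _ ->.
rewrite rcons_path last_rcons => /andP [Hp Hz] ->.
apply: (step (last c p)) => //.
  by apply/connectP; exists p.
exact: IH.
Qed.

Section Main.
Variables (T : finType) (e : rel T).
Hypothesis esym : symmetric e.
Hypothesis eirr : irreflexive e.
Hypothesis no6 : ~ has_Ck e 6.
Hypothesis no7 : ~ has_Ck e 7.
Variable x : T.
Local Notation W := (N2 e x).

Lemma N2_nbr y : y \in W -> exists t, e x t && e t y.
Proof. by rewrite inE => /and3P [_ _ /existsP]. Qed.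
Lemma N2_nx y : y \in W -> ~~ e x y.
Proof. by rewrite inE => /and3P []. Qed.
Lemma neq_N2_N y t : y \in W -> e x t -> y != t.
Proof. by move=> /N2_nx H Ht; apply: contraNneq H => ->. Qed.
Lemma neq_N2_x y : y \in W -> y != x.
Proof. by rewrite inE => /and3P []. Qed.
Lemma neq_N_x t : e x t -> t != x.
Proof. by move=> H; apply: contraTneq H => ->; rewrite eirr. Qed.
Lemma neq_edge u v : e u v -> u != v.
Proof. by move=> H; apply: contraTneq H => ->; rewrite eirr. Qed.

Ltac neq := match goal with
 | |- is_true (?u != ?v) => first [ assumption | rewrite eq_sym; assumption
   | by apply: neq_N2_N | by rewrite eq_sym; apply: neq_N2_N
   | by apply: neq_N2_x | by rewrite eq_sym; apply: neq_N2_x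
   | by apply: neq_N_x | by rewrite eq_sym; apply: neq_N_x
   | by apply: neq_edge | by rewrite eq_sym; apply: neq_edge ]
 end.
Ltac edge := first [assumption | rewrite esym; assumption].
Ltac uniqt := rewrite /= !inE !negb_or ?andbT; repeat (apply/andP; split); try done; neq.
Ltac c6 u0 u1 u2 u3 u4 u5 := apply: no6; apply: (@mkC6 T e u0 u1 u2 u3 u4 u5); [edge|edge|edge|edge|edge|edge|uniqt].
Ltac c7 u0 u1 u2 u3 u4 u5 u6 := apply: no7; apply: (@mkC7 T e u0 u1 u2 u3 u4 u5 u6); [edge|edge|edge|edge|edge|edge|edge|uniqt].

Lemma isym (S : {set T}) : symmetric (induced e S).
Proof.
move=> u v; rewrite /induced esym.
by case: (u \in S); case: (v \in S); rewrite ?andbT ?andbF.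
Qed.
Lemma csym : connect_sym (induced e W).
Proof. exact: sym_connect_sym (@isym W). Qed.

Definition cls y := [set z | connect (induced e W) y z].

Lemma comp_cls C y : is_comp e W C -> y \in C -> C = cls y.
Proof.
case/existsP=> c /andP [_ /eqP ->]; rewrite inE => Hcy.
apply/setP=> z; rewrite !inE; apply/idP/idP => H.
  by apply: connect_trans H; rewrite csym.
exact: connect_trans H.
Qed.
Lemma cls_comp y : y \in W -> is_comp e W (cls y).
Proof. by move=> H; apply/existsP; exists y; rewrite H eqxx. Qed.
Lemma cls_self y : y \in cls y.
Proof. by rewrite inE connect0. Qed.
Lemma cls_sub y z : y \in W -> z \in cls y -> z \in W.
Proof.
move=> Hy; rewrite inE; move: z; apply: connect_ind' => // u v _ _.
by case/and3P.
Qed.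
Lemma comp_sub C z : is_comp e W C -> z \in C -> z \in W.
Proof.
by case/existsP=> c /andP [Hc /eqP ->] Hz; apply: (cls_sub Hc Hz).
Qed.
Lemma comp_eq C1 C2 y : is_comp e W C1 -> is_comp e W C2 -> y \in C1 -> y \in C2 -> C1 = C2.
Proof. by move=> H1 H2 y1 y2; rewrite (comp_cls H1 y1) (comp_cls H2 y2). Qed.
Lemma comp_step C y z : is_comp e W C -> y \in C -> z \in W -> e y z -> z \in C.
Proof.
move=> HC Hy Hz Hyz; rewrite (comp_cls HC Hy) inE; apply: connect1.
by rewrite /induced Hyz Hz (comp_sub HC Hy).
Qed.

Record setting (A : {set T}) (a v1 v2 : T) : Prop := Setting {
 sA : is_comp e W A; sa : a \in A; snA : ~~ in_Astar e x A; sv : v1 != v2;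
 sa1 : e a v1; sa2 : e a v2; sx1 : e x v1; sx2 : e x v2;
 sD1 : v1 \notin NS e (VAstar e x); sD2 : v2 \notin NS e (VAstar e x) }.

Lemma swapS A a v1 v2 : setting A a v1 v2 -> setting A a v2 v1.
Proof. by case=> *; constructor => //; rewrite eq_sym. Qed.

Lemma L1 A a v1 v2 (St : setting A a v1 v2) z : z \in A -> z = a \/ e a z.
Proof.
case: St => HA Ha HnA Hv Ha1 Ha2 Hx1 Hx2 _ _.
have aW := comp_sub HA Ha.
rewrite (comp_cls HA Ha) inE; move: z; apply: connect_ind'; first by left.
move=> y z _ [->|Hay] /and3P [Hyz Hy Hz]; first by right.
case: (eqVneq z a) => [->|Hza]; first by left.
exfalso; case: (N2_nbr Hz) => t /andP [Hxt Htz].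
case: (eqVneq t v1) => [Et|Ht].
  subst t. c6 v2 a y z v1 x.
c6 v1 a y z t x.
Qed.

Lemma NvxA_sub C z : is_comp e W C -> z \in C ->
  Nv e x :&: Nv e z \subset Nv e x :&: NS e C.
Proof.
move=> HC Hz; apply/subsetP => t; rewrite !inE => /andP [Hxt Hzt].
rewrite Hxt /=; apply/andP; split.
  apply/negP => /(comp_sub HC) /N2_nx; by rewrite Hxt.
by apply/existsP; exists z; rewrite Hz Hzt.
Qed.

Lemma Lub A a v1 v2 (St : setting A a v1 v2) :
  exists u b, [/\ e x u, ~~ e a u, b \in A, e b u & e a b].
Proof.
have HA := sA St; have Ha := sa St.
have H : ~~ (Nv e x :&: Nv e a == Nv e x :&: NS e A).
  apply: contra (snA St) => H; rewrite /in_Astar HA /=.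
  by apply/existsP; exists a; rewrite Ha H.
move: H; rewrite eqEsubset (NvxA_sub HA Ha) /= => /subsetPn [u].
rewrite !inE => /andP [Hxu /andP [_ /existsP [b /andP [Hb Hbu]]]].
rewrite Hxu /= => Hau.
exists u, b; split => //.
case: (L1 St Hb) => [Eb|//]; by subst b; rewrite Hbu in Hau.
Qed.

Lemma L3 A a v1 v2 (St : setting A a v1 v2) w :
  w \in A -> w != a -> e w v1 -> False.
Proof.
move=> Hw Hwa Hw1.
have [u [b [Hxu Hau Hb Hbu Hab]]] := Lub St.
have Haw : e a w by case: (L1 St Hw) => // E; rewrite E eqxx in Hwa.
case: St => HA Ha HnA Hv Ha1 Ha2 Hx1 Hx2 _ _.
have aW := comp_sub HA Ha; have wW := comp_sub HA Hw; have bW := comp_sub HA Hb.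
have u1 : u != v1 by apply: contraNneq Hau => ->.
have u2 : u != v2 by apply: contraNneq Hau => ->.
case: (eqVneq w b) => [E|Hwb].
  subst w. c6 a v2 x u b v1.
c6 w v1 x u b a.
Qed.

Lemma L4 A a v1 v2 (St : setting A a v1 v2) z t :
  z \in W -> z != a -> e z v1 -> e x t -> e z t -> (t == v1) || (t == v2).
Proof.
move=> Hz Hza Hz1 Hxt Hzt; apply/negPn/negP => /norP [t1 t2].
case: St => HA Ha HnA Hv Ha1 Ha2 Hx1 Hx2 _ _.
have aW := comp_sub HA Ha.
apply: no6; apply: (@mkC6 T e a v2 x t z v1); [edge|edge|edge|edge|edge|edge|uniqt].
Qed.

Lemma L5 A a v1 v2 (St : setting A a v1 v2) z y t :
  z \in W -> y \in W -> z != a -> y != a -> e z y -> e y v1 -> e x t -> e z t ->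
  (t == v1) || (t == v2).
Proof.
move=> Hz Hy Hza Hya Hzy Hy1 Hxt Hzt; apply/negPn/negP => /norP [t1 t2].
case: St => HA Ha HnA Hv Ha1 Ha2 Hx1 Hx2 _ _.
have aW := comp_sub HA Ha.
c7 t z y v1 a v2 x.
Qed.

Lemma L6 y p z s t : y \in W -> p \in W -> z \in W -> e y p -> e p z -> z != y ->
  e y s -> e x s -> e z t -> e x t -> s = t.
Proof.
move=> Hy Hp Hz Hyp Hpz Hzy Hys Hxs Hzt Hxt; apply/eqP/negPn/negP => Hst.
c6 s y p z t x.
Qed.

Lemma notA A c z : is_comp e W A -> c \in W -> c \notin A -> z \in cls c -> z \notin A.
Proof.
move=> HA cW cA Hz; apply/negP => zA.
have E := comp_eq HA (cls_comp cW) zA Hz.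
by rewrite E cls_self in cA.
Qed.

Lemma L7 A a v1 v2 (St : setting A a v1 v2) c :
  c \in W -> c \notin A -> (e c v1 || e c v2) -> forall z, z \in cls c ->
  z \in W /\ ((e z v1 || e z v2) \/ exists y, [/\ y \in W, y != a, e z y & (e y v1 || e y v2)]).
Proof.
move=> cW cA adjc z Hz.
have nzA : forall z, z \in cls c -> z != a.
  move=> z' Hz'; apply: contraNneq (notA (sA St) cW cA Hz') => ->; exact: sa St.
have Hx1 := sx1 St; have Hx2 := sx2 St.
rewrite inE in Hz; move: z Hz; apply: connect_ind'; first by split => //; left.
move=> y z Hcy [yW Py] Hyz'; have Hyz'2 := Hyz'; case/and3P: Hyz' => Hyz _ zW.
have Hcz : connect (induced e W) c z by apply: connect_trans Hcy (connect1 Hyz'2).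
have za : z != a by apply: nzA; rewrite inE.
have ya : y != a by apply: nzA; rewrite inE.
split => //.
case: Py => [Hy|[y' [y'W y'a Hyy' Hy']]].
  by right; exists y; split => //; rewrite esym.
case: (eqVneq z y') => [->|zy']; first by left.
case: (N2_nbr zW) => t /andP [Hxt Htz].
have Hy'y : e y' y by rewrite esym.
have Hzt : e z t by rewrite esym.
case/orP: Hy' => Hy'v.
  have E := L6 y'W yW zW Hy'y Hyz zy' Hy'v Hx1 Hzt Hxt.
  by left; rewrite E Hzt.
have E := L6 y'W yW zW Hy'y Hyz zy' Hy'v Hx2 Hzt Hxt.
by left; rewrite E Hzt orbT.
Qed.

Lemma L8 A a v1 v2 (St : setting A a v1 v2) c :
  c \in W -> c \notin A -> (e c v1 || e c v2) -> forall z t, z \in cls c ->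
  e x t -> e z t -> (t == v1) || (t == v2).
Proof.
move=> cW cA adjc z t Hz Hxt Hzt.
have za : z != a.
  apply: contraNneq (notA (sA St) cW cA Hz) => ->; exact: sa St.
case: (L7 St cW cA adjc Hz) => zW [/orP [H|H]|[y [yW ya Hzy /orP [H|H]]]].
- by have := L4 St zW za H Hxt Hzt.
- have S2 := swapS St. by rewrite orbC; apply: (L4 S2 zW za H Hxt Hzt).
- by have := L5 St zW yW za ya Hzy H Hxt Hzt.
- have S2 := swapS St. by rewrite orbC; apply: (L5 S2 zW yW za ya Hzy H Hxt Hzt).
Qed.

Lemma VA_notin t : e x t -> t \notin VAstar e x.
Proof.
move=> Hxt; rewrite inE; apply/existsP => [[C /andP [/andP [HC _] tC]]].
by have := N2_nx (comp_sub HC tC); rewrite Hxt.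
Qed.

Lemma NS_in C c v : is_comp e W C -> c \in C -> e x v -> e c v -> v \in NS e C.
Proof.
move=> HC cC Hxv Hcv; rewrite inE; apply/andP; split.
  by apply/negP => /(comp_sub HC) /N2_nx; rewrite Hxv.
by apply/existsP; exists c; rewrite cC Hcv.
Qed.

Lemma notAstar A a v1 v2 (St : setting A a v1 v2) C c :
  is_comp e W C -> c \in C -> e c v1 -> ~~ in_Astar e x C.
Proof.
move=> HC cC Hc1; apply/negP => HC'.
have cV : c \in VAstar e x by rewrite inE; apply/existsP; exists C; rewrite HC' cC.
have := sD1 St; rewrite inE VA_notin ?(sx1 St) //=.
by move/existsP; apply; exists c; rewrite cV Hc1.
Qed.

Lemma notinA A C c : is_comp e W A -> is_comp e W C -> C != A -> c \in C -> c \notin A.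
Proof.
move=> HA HC CA cC; apply/negP => cA.
by rewrite (comp_eq HC HA cC cA) eqxx in CA.
Qed.

Lemma Lsub A a v1 v2 (St : setting A a v1 v2) C c :
  is_comp e W C -> C != A -> c \in C -> (e c v1 || e c v2) ->
  forall t, t \in NS e C -> e x t -> (t == v1) || (t == v2).
Proof.
move=> HC CA cC adjc t; rewrite inE => /andP [_ /existsP [s /andP [sC Hst]]] Hxt.
have cW := comp_sub HC cC.
have cA := notinA (sA St) HC CA cC.
have sc : s \in cls c by rewrite -(comp_cls HC cC).
by have := L8 St cW cA adjc sc Hxt Hst.
Qed.

Lemma L9a A a v1 v2 (St : setting A a v1 v2) C c :
  is_comp e W C -> C != A -> c \in C -> e c v1 -> v2 \in NS e C.
Proof.
move=> HC CA cC Hc1.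
have nC := notAstar St HC cC Hc1.
have H : ~~ (Nv e x :&: Nv e c == Nv e x :&: NS e C).
  apply: contra nC => H; rewrite /in_Astar HC /=.
  by apply/existsP; exists c; rewrite cC H.
move: H; rewrite eqEsubset (NvxA_sub HC cC) /= => /subsetPn [t].
rewrite in_setI [t \in Nv e x]inE => /andP [Hxt HtC].
rewrite in_setI !inE Hxt /= => Hct.
have adjc : e c v1 || e c v2 by rewrite Hc1.
case/orP: (Lsub St HC CA cC adjc HtC Hxt) => /eqP Et; subst t.
  by rewrite Hc1 in Hct.
by rewrite inE in HtC.
Qed.

Lemma L9 A a v1 v2 (St : setting A a v1 v2) C c :
  is_comp e W C -> C != A -> c \in C -> (e c v1 || e c v2) ->
  NS e C :&: Nv e x = [set v1; v2] /\
  exists b1 b2, [/\ b1 \in C, b2 \in C, e b1 b2, e b1 v1 & e b2 v2].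
Proof.
move=> HC CA cC adjc.
have Hx1 := sx1 St; have Hx2 := sx2 St.
have cW := comp_sub HC cC.
have cA := notinA (sA St) HC CA cC.
have [in1 in2] : v1 \in NS e C /\ v2 \in NS e C.
  case/orP: (adjc) => H.
    by split; [exact (NS_in HC cC Hx1 H) | exact (L9a St HC CA cC H)].
  by split; [exact (L9a (swapS St) HC CA cC H) | exact (NS_in HC cC Hx2 H)].
have Eq : NS e C :&: Nv e x = [set v1; v2].
  apply/setP => t; rewrite in_setI [t \in Nv e x]inE in_set2.
  apply/idP/idP.
    by case/andP => H1 H2; apply: (Lsub St HC CA cC adjc H1 H2).
  by case/orP => /eqP ->; rewrite ?in1 ?in2.
split => //.
have nC : ~~ in_Astar e x C.
  case/orP: adjc => H; first exact (notAstar St HC cC H).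
  exact (notAstar (swapS St) HC cC H).
have each : forall b, b \in C -> ~~ (e b v1 && e b v2).
  move=> b bC; apply/negP => /andP [b1 b2]; move/negP: nC; apply.
  rewrite /in_Astar HC /=; apply/existsP; exists b; rewrite bC /=.
  rewrite [Nv e x :&: NS e C]setIC Eq; apply/eqP/setP => t; rewrite in_setI in_set2 !inE.
  apply/idP/idP.
    case/andP => Hxt Hbt.
    have bc : b \in cls c by rewrite -(comp_cls HC cC).
    by have := L8 St cW cA adjc bc Hxt Hbt.
  by case/orP => /eqP ->; rewrite ?Hx1 ?Hx2 ?b1 ?b2.
move: in1; rewrite inE => /andP [_ /existsP [b1 /andP [b1C Hb1]]].
move: in2; rewrite inE => /andP [_ /existsP [b2 /andP [b2C Hb2]]].
case: (boolP [exists p : T * T, [&& p.1 \in C, p.2 \in C, e p.1 p.2, e p.1 v1 & e p.2 v2]]).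
  by case/existsP => [[y z]] /and5P [yC zC Hyz Hy1 Hz2]; exists y, z.
move=> Hno; exfalso.
have ECb1 := comp_cls HC b1C.
have all1 : forall z, z \in C -> e z v1.
  move=> z; rewrite ECb1 inE; move: z; apply: connect_ind'; first by [].
  move=> y z Hcy Hy1 Hyz'.
  have Hcz : connect (induced e W) b1 z by apply: connect_trans Hcy (connect1 Hyz').
  case/and3P: Hyz' => Hyz _ zW.
  have zC : z \in C by rewrite ECb1 inE.
  have yC : y \in C by rewrite ECb1 inE.
  case: (N2_nbr zW) => t /andP [Hxt Htz].
  have Hzt : e z t by rewrite esym.
  have zc : z \in cls c by rewrite -(comp_cls HC cC).
  case/orP: (L8 St cW cA adjc zc Hxt Hzt) => /eqP Et; subst t; first by [].
  move/negP: Hno; case; apply/existsP; exists (y, z).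
  by rewrite /= yC zC Hyz Hzt Hy1.
have := each b2 b2C; by rewrite (all1 b2 b2C) Hb2.
Qed.

Lemma getc C v : v \in NS e C -> exists2 c, c \in C & e c v.
Proof. by rewrite inE => /andP [_ /existsP [c /andP [cC Hc]]]; exists c. Qed.

Lemma L10 A a v1 v2 (St : setting A a v1 v2) B B' :
  is_comp e W B -> is_comp e W B' -> B != A -> B' != A ->
  NS e B :&: Nv e x = [set v1; v2] -> NS e B' :&: Nv e x = [set v1; v2] -> B = B'.
Proof.
move=> HB HB' BA B'A EB EB'.
have Hx1 := sx1 St; have Hx2 := sx2 St; have Hv := sv St.
have : v1 \in NS e B :&: Nv e x by rewrite EB in_set2 eqxx.
rewrite in_setI => /andP [/getc [c cB Hc] _].
have : v1 \in NS e B' :&: Nv e x by rewrite EB' in_set2 eqxx.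
rewrite in_setI => /andP [/getc [c' cB' Hc'] _].
have adjc : e c v1 || e c v2 by rewrite Hc.
have adjc' : e c' v1 || e c' v2 by rewrite Hc'.
have [_ [b1 [b2 [b1B b2B H12 H1 H2]]]] := L9 St HB BA cB adjc.
have [_ [d1 [d2 [d1B d2B D12 D1 D2]]]] := L9 St HB' B'A cB' adjc'.
case: (eqVneq B B') => // BB; exfalso.
have dj : forall y z, y \in B -> z \in B' -> y != z.
  move=> y z yB zB; apply/eqP => E; subst z.
  by rewrite (comp_eq HB HB' yB zB) eqxx in BB.
have n11 := dj _ _ b1B d1B; have n12 := dj _ _ b1B d2B.
have n21 := dj _ _ b2B d1B; have n22 := dj _ _ b2B d2B.
have b1W := comp_sub HB b1B; have b2W := comp_sub HB b2B.
have d1W := comp_sub HB' d1B; have d2W := comp_sub HB' d2B.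
c6 b1 b2 v2 d2 d1 v1.
Qed.

End Main.

Theorem lemma2p11 (T : finType) (e : rel T) (Hsimple : simple_graph e)
  (HG : no_C6_C7 e) (x : T) (A : {set T})
  (HA : is_comp e (N2 e x) A) (HnA : ~~ in_Astar e x A)
  (a : T) (Ha : a \in A) (v1 v2 : T) (Hv : v1 != v2)
  (HaD : Nv e a :&: Dset e x = [set v1; v2]) :
  (NS e [set v1; v2] :&: N2 e x = [set a]) \/
  (exists A' : {set T},
     [/\ is_comp e (N2 e x) A', A' != A,
         NS e A' :&: Nv e x = [set v1; v2],
         (forall B : {set T}, is_comp e (N2 e x) B -> B != A ->
             NS e B :&: Nv e x = [set v1; v2] -> B = A') &
         (forall A'' : {set T}, is_comp e (N2 e x) A'' -> A'' != A -> A'' != A' ->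
             [set v1; v2] :&: NS e A'' = set0)]).
Proof.
case: Hsimple => esym eirr; case: HG => no6 no7.
have : v1 \in Nv e a :&: Dset e x by rewrite HaD in_set2 eqxx.
rewrite in_setI in_setD => /and3P [Ha1 HD1 Hx1]; rewrite inE in Ha1 Hx1.
have : v2 \in Nv e a :&: Dset e x by rewrite HaD in_set2 eqxx orbT.
rewrite in_setI in_setD => /and3P [Ha2 HD2 Hx2]; rewrite inE in Ha2 Hx2.
move: Hx1 Hx2; rewrite !inE => Hx1 Hx2.
have St : setting e x A a v1 v2 by constructor.
have aW := comp_sub HA Ha.
case: (boolP [exists w, [&& w \in N2 e x, w != a & (e w v1 || e w v2)]]) => [|Hno].
  case/existsP => w /and3P [wW wa adjw].
  have wA : w \notin A.
    apply/negP => wA; case/orP: adjw => H.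
      exact: (L3 esym eirr no6 St wA wa H).
    exact: (L3 esym eirr no6 (swapS St) wA wa H).
  have Hc := cls_comp wW.
  have A'A : cls e x w != A.
    by apply: contraNneq wA => <-; apply: cls_self.
  have [Eq _] := L9 esym eirr no6 no7 St Hc A'A (cls_self e x w) adjw.
  right; exists (cls e x w); split => //.
    move=> B HB BA EB; exact: (L10 esym eirr no6 no7 St HB Hc BA A'A EB Eq).
  move=> C HC CA CA'; apply/eqP/negPn/negP => /set0Pn [t].
  rewrite in_setI in_set2 => /andP [Ht /getc [c cC Hct]].
  have adjc : e c v1 || e c v2 by case/orP: Ht => /eqP Et; subst t; rewrite Hct ?orbT.
  have [EC _] := L9 esym eirr no6 no7 St HC CA cC adjc.
  have := L10 esym eirr no6 no7 St HC Hc CA A'A EC Eq.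
  by move=> E; rewrite E eqxx in CA'.
left; apply/setP => z; rewrite in_setI in_set1; apply/idP/idP.
  case/andP => /getc [s sV Hsz] zW.
  apply/negPn/negP => za; move/negP: Hno; apply; apply/existsP; exists z.
  rewrite zW za /=; rewrite esym in Hsz; move: sV; rewrite in_set2 => /orP [] /eqP Es; subst s;
    by rewrite Hsz ?orbT.
move=> /eqP ->; rewrite aW andbT inE in_set2.
rewrite negb_or (neq_N2_N aW Hx1) (neq_N2_N aW Hx2) /=.
apply/existsP; exists v1; rewrite in_set2 eqxx /=. by rewrite esym.
Qed.
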